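(* Let $n>2$ and let $p_{(1)}<\dots<p_{(n)}$ be the order statistics of $n$ i.i.d. $\mathrm{Uniform}(0,1)$ random variables. Let $K(x,t):=x\log\frac xt+(1-x)\log\frac{1-x}{1-t}$ for $x\in[0,1)$, $t\in(0,1)$ (with $0\log0=0$). Then for every $s>0$ and every $j\in\{2,\dots,n\}$, $$\mathbb P\big(nK(j/n,p_{(j)})>s\big)\le e\sqrt2\,j\,e^{-(1-1/j)s},$$ and for $j=1$, $$\mathbb P\big(nK(1/n,p_{(1)})>s\big)\le(1+9/e)\,e^{-s}.$$ *)

(* Defs.v *)
From HB Require Import structures.
From mathcomp Require Import all_boot all_order all_algebra.
From mathcomp Require Import all_classical all_reals all_analysis.
Set Implicit Arguments. Unset Strict Implicit. Unset Printing Implicit Defensive.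
Import Order.TTheory GRing.Theory Num.Theory.
Local Open Scope classical_set_scope.
Local Open Scope ring_scope.

Definition xlogxy {R : realType} (a b : R) : R :=
  if a == 0 then 0 else a * ln (a / b).

Definition Kdiv {R : realType} (x t : R) : R :=
  xlogxy x t + xlogxy (1 - x) (1 - t).

(* j-th order statistic (1-indexed) of the sample s *)
Definition order_stat {R : realType} (s : seq R) (j : nat) : R :=
  nth 0 (sort <=%R s) j.-1.

(* Lebesgue measure on [0,1]^n of a (boolean) event on samples of length n,
   i.e. the probability of the event for n i.i.d. Uniform(0,1) variables,
   computed as an iterated integral (Tonelli). *)
Fixpoint unif_prob {R : realType} (n : nat) (E : seq R -> bool) : \bar R :=
  match n with
  | 0 => (if E [::] then 1 else 0)%E
  | n'.+1 => (\int[@lebesgue_measure R]_(x in `[0%R, 1%R])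
                 unif_prob n' (fun s => E (x :: s)))%E
  end.

(* Main.v *)
Set Warnings "-all".
Require Import Defs.
From HB Require Import structures.
From mathcomp Require Import all_boot all_order all_algebra.
From mathcomp Require Import all_classical all_reals all_analysis.
From mathcomp Require Import zify ring lra.
Import measurable_realfun.
Import numFieldNormedType.Exports.
Import Order.TTheory GRing.Theory Num.Theory.
Local Open Scope classical_set_scope.
Local Open Scope ring_scope.
Fixpoint Iint {R : realType} (n : nat) (f : seq R -> R) : \bar R :=
  match n with
  | 0 => ((f [::])%:E)%E
  | n'.+1 => (\int[@lebesgue_measure R]_(x in `[0%R, 1%R])
                 Iint n' (fun s => f (x :: s)))%E
  end.

Lemma le_int_nm {R : realType} (D : set R) (f1 f2 : R -> \bar R) :
  (forall x, D x -> (0 <= f1 x)%E) -> (forall x, D x -> (f1 x <= f2 x)%E) ->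
  (\int[@lebesgue_measure R]_(x in D) f1 x <=
   \int[@lebesgue_measure R]_(x in D) f2 x)%E.
Proof.
move=> f10 f12.
have f20 : forall x, D x -> (0 <= f2 x)%E.
  by move=> x Dx; apply: le_trans (f10 x Dx) (f12 x Dx).
rewrite !ge0_integralE//; apply: ereal_sup_le => _ [h /= hf <-].
exists h => //= x; apply: le_trans (hf x) _.
rewrite /patch; case: ifP => // /set_mem Dx; exact: f12.
Qed.

Definition in01 {R : realType} (y : R) := (0 <= y <= 1)%R.

Lemma unif_prob_ge0 {R : realType} n (E : seq R -> bool) : (0 <= unif_prob n E)%E.
Proof.
elim: n E => [|n IH] E /=; first by case: (E [::]).
by apply: integral_ge0 => x _; exact: IH.
Qed.

Lemma unif_le_Iint {R : realType} n (E : seq R -> bool) (f : seq R -> R) :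
  (forall p, size p = n -> all in01 p -> 0 <= f p /\ (E p -> 1 <= f p)) ->
  (unif_prob n E <= Iint n f)%E.
Proof.
elim: n E f => [|n IH] E f H /=.
  have [f0 f1] := H [::] erefl erefl.
  by case: (E [::]) f1 => [f1|_]; rewrite lee_fin; [exact: f1|].
apply: le_int_nm => x Dx; first exact: unif_prob_ge0.
apply: IH => p sp ap; apply: H => /=; first by rewrite sp.
rewrite ap andbT /in01.
by move: Dx; rewrite /= in_itv /=.
Qed.
Definition prodg {R : realType} (g : R -> R) (s : seq R) := \prod_(y <- s) g y.

Lemma prodg_cons {R : realType} (g : R -> R) x s : prodg g (x :: s) = g x * prodg g s.
Proof. by rewrite /prodg big_cons. Qed.

Lemma Iint_prod {R : realType} n (c1 c2 : R) (g1 g2 : R -> R) (G1 G2 : R) :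
  (forall y, 0 <= g1 y) -> (forall y, 0 <= g2 y) ->
  measurable_fun setT g1 -> measurable_fun setT g2 ->
  (\int[@lebesgue_measure R]_(y in `[0%R, 1%R]) (g1 y)%:E = G1%:E)%E ->
  (\int[@lebesgue_measure R]_(y in `[0%R, 1%R]) (g2 y)%:E = G2%:E)%E ->
  0 <= c1 -> 0 <= c2 ->
  Iint n (fun s => c1 * prodg g1 s + c2 * prodg g2 s) =
  (c1 * G1 ^+ n + c2 * G2 ^+ n)%:E.
Proof.
move=> g10 g20 mg1 mg2 I1 I2.
elim: n c1 c2 => [|n IH] c1 c2 c10 c20.
  by rewrite /= /prodg !big_nil !expr0.
rewrite /=.
have G10 : 0 <= G1.
  by rewrite -lee_fin -I1; apply: integral_ge0 => y _; rewrite lee_fin.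
have G20 : 0 <= G2.
  by rewrite -lee_fin -I2; apply: integral_ge0 => y _; rewrite lee_fin.
have -> : (fun x => Iint n (fun s => c1 * prodg g1 (x :: s) + c2 * prodg g2 (x :: s)))
   = (fun x => ((c1 * G1 ^+ n)%:E * (g1 x)%:E + (c2 * G2 ^+ n)%:E * (g2 x)%:E)%E).
  apply/funext => x.
  have -> : (fun s => c1 * prodg g1 (x :: s) + c2 * prodg g2 (x :: s)) =
            (fun s => (c1 * g1 x) * prodg g1 s + (c2 * g2 x) * prodg g2 s).
    by apply/funext => s; rewrite !prodg_cons !mulrA.
  rewrite IH ?mulr_ge0// -!EFinM -EFinD; congr EFin.
  by rewrite (mulrAC c1) (mulrAC c2).
have mD : measurable (`[0%R, 1%R] : set R) by exact: measurable_itv.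
have mE : forall g : R -> R, measurable_fun setT g ->
    measurable_fun (`[0%R, 1%R] : set R) (EFin \o g).
  by move=> g mg; apply/measurable_EFinP; exact: measurable_funTS.
rewrite ge0_integralD//; first last.
- by apply: emeasurable_funM => //; exact: mE.
- by move=> x _; rewrite -EFinM lee_fin mulr_ge0 ?mulr_ge0 ?exprn_ge0.
- by apply: emeasurable_funM => //; exact: mE.
- by move=> x _; rewrite -EFinM lee_fin mulr_ge0 ?mulr_ge0 ?exprn_ge0.
rewrite ge0_integralZl_EFin//; first last.
- by rewrite mulr_ge0 ?exprn_ge0.
- exact: mE.
- by move=> x _; rewrite lee_fin.
rewrite ge0_integralZl_EFin//; first last.
- by rewrite mulr_ge0 ?exprn_ge0.
- exact: mE.
- by move=> x _; rewrite lee_fin.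
by rewrite I1 I2 -!EFinM -EFinD !exprSr !mulrA.
Qed.
Definition step {R : realType} (u v : R) (A : set R) := fun y : R => u + v * \1_A y.

Lemma step_meas {R : realType} (u v : R) (A : set R) : measurable A ->
  measurable_fun setT (step u v A).
Proof.
move=> mA; rewrite /step; apply: measurable_funD => //.
by apply: measurable_funM => //; exact: measurable_indic.
Qed.

Lemma step_ge0 {R : realType} (u v : R) (A : set R) : 0 <= u -> 0 <= v ->
  forall y, 0 <= step u v A y.
Proof. by move=> u0 v0 y; rewrite /step addr_ge0 ?mulr_ge0. Qed.

Lemma meas01 {R : realType} : @lebesgue_measure R (`[0%R, 1%R]) = 1%E.
Proof. by rewrite lebesgue_measure_itv /= lte01 -EFinB subr0. Qed.

Lemma int_step {R : realType} (u v : R) (A : set R) : measurable A -> 0 <= u -> 0 <= v ->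
  (\int[@lebesgue_measure R]_(y in `[0%R, 1%R]) (step u v A y)%:E =
   u%:E + v%:E * @lebesgue_measure R (A `&` `[0%R, 1%R]))%E.
Proof.
move=> mA u0 v0.
have mD : measurable (`[0%R, 1%R] : set R) by exact: measurable_itv.
rewrite /step.
under eq_integral do rewrite EFinD EFinM.
have mI : measurable_fun (`[0%R, 1%R] : set R) (EFin \o (\1_A : R -> R)).
  by apply/measurable_EFinP; exact: measurable_indic.
rewrite ge0_integralD//; last 2 first.
- by move=> x _; rewrite -EFinM lee_fin mulr_ge0.
- by apply: emeasurable_funM => //; exact: mI.
rewrite ge0_integralZl_EFin//; try by move=> x _; rewrite lee_fin.
have -> : (\int[@lebesgue_measure R]_(_ in `[0%R, 1%R]) u%:E = u%:E)%E.
  have := integral_cst (@lebesgue_measure R) mD u%:E.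
  move=> H; apply: (eq_trans _ (eq_trans H _)); first by apply: eq_integral.
  rewrite -[RHS]mule1; congr (_ * _)%E; exact: meas01.
by rewrite integral_indic.
Qed.

Lemma meas_low {R : realType} (a : R) : 0 <= a <= 1 ->
  @lebesgue_measure R (`[0%R, a[ `&` `[0%R, 1%R]) = a%:E.
Proof.
move=> /andP[a0 a1].
rewrite setIidl; last first.
  move=> y; rewrite /= !in_itv /= => /andP[-> ya].
  by rewrite (le_trans (ltW ya)).
rewrite lebesgue_measure_itv /= lte_fin.
case: ltP => h; first by rewrite -EFinB subr0.
by have -> : a = 0 by apply/eqP; rewrite eq_le a0 h.
Qed.

Lemma meas_high {R : realType} (b : R) : 0 <= b <= 1 ->
  @lebesgue_measure R (`]b, 1%R] `&` `[0%R, 1%R]) = (1 - b)%:E.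
Proof.
move=> /andP[b0 b1].
rewrite setIidl; last first.
  move=> y; rewrite /= !in_itv /= => /andP[by' ->].
  by rewrite (le_trans b0 (ltW by')).
rewrite lebesgue_measure_itv /= lte_fin.
case: ltP => h; first by rewrite -EFinB.
have -> : b = 1 by apply/eqP; rewrite eq_le b1 h.
by rewrite subrr.
Qed.
Lemma os_facts {R : realType} (p : seq R) j : (0 < j <= size p)%N ->
  [/\ order_stat p j \in p,
      (j <= count (fun y : R => (y <= order_stat p j)%R) p)%N &
      (size p - j + 1 <= count (fun y : R => (order_stat p j <= y)%R) p)%N].
Proof.
move=> /andP[j0 jn].
set q := sort <=%R p.
have Hq : perm_eq q p by rewrite /q perm_sort perm_refl.
have sq : size q = size p by rewrite size_sort.
have srt : sorted <=%R q by apply: sort_sorted; exact: le_total.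
have mono := sorted_leq_nth le_trans lexx 0 srt.
have jq : (j.-1 < size q)%N by rewrite sq; case: j j0 jn.
rewrite /order_stat -/q.
set t := nth 0 q j.-1.
split.
- by rewrite -(perm_mem Hq) mem_nth.
- rewrite -(permP Hq) -(cat_take_drop j q) count_cat.
  apply: leq_trans (leq_addr _ _).
  have : all (fun y => y <= t) (take j q).
    apply/allP => y /(nthP 0) [i]; rewrite size_take => Hi <-.
    have ij : (i < j)%N by move: Hi; case: ifP => // /negbT; rewrite -leqNgt => h /leq_trans; apply.
    have iq : (i < size q)%N by apply: leq_trans ij _; rewrite sq.
    have ij' : (i <= j.-1)%N by move: ij; case: (j) j0 => //.
    by rewrite nth_take //; apply: mono; rewrite ?inE.
  rewrite all_count => /eqP ->; rewrite size_take.
  by case: ifP => // _; rewrite sq.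
- rewrite -(permP Hq) -(cat_take_drop j.-1 q) count_cat.
  apply: leq_trans (leq_addl _ _).
  have : all (fun y => t <= y) (drop j.-1 q).
    apply/allP => y /(nthP 0) [i]; rewrite size_drop => Hi <-.
    have iq : (j.-1 + i < size q)%N by rewrite -ltn_subRL.
    have ij' : (j.-1 <= j.-1 + i)%N by exact: leq_addr.
    by rewrite nth_drop; apply: mono; rewrite ?inE.
  rewrite all_count => /eqP ->; rewrite size_drop sq.
  clear -j0 jn; lia.
Qed.
Lemma prod_ge_pow {R : realType} (g : R -> R) (P : pred R) (z : R) (p : seq R) k :
  1 <= z -> (forall y, y \in p -> 1 <= g y) -> (forall y, y \in p -> P y -> z <= g y) ->
  (k <= count P p)%N -> z ^+ k <= prodg g p.
Proof.
move=> z1; elim: p k => [|y p IH] k g1 gz /=.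
  by rewrite leqn0 => /eqP ->; rewrite /prodg big_nil expr0.
have g1' : forall y, y \in p -> 1 <= g y by move=> x xp; apply: g1; rewrite inE xp orbT.
have gz' : forall y, y \in p -> P y -> z <= g y by move=> x xp; apply: gz; rewrite inE xp orbT.
have gy1 : 1 <= g y by apply: g1; rewrite inE eqxx.
have z0 : 0 <= z by apply: le_trans z1; exact: ler01.
have p1 : 1 <= prodg g p by rewrite -(expr0 z); apply: IH.
rewrite prodg_cons.
case Py: (P y) => /=.
- case: k => [_|k]; first by rewrite expr0 -[1]mulr1 ler_pM.
  rewrite add1n ltnS => kc; rewrite exprS ler_pM ?exprn_ge0 //; last exact: IH.
  by apply: gz => //; rewrite inE eqxx.
- rewrite add0n => kc; rewrite -[z ^+ k]mul1r ler_pM ?exprn_ge0 //; exact: IH.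
Qed.

Lemma prod_ge_all {R : realType} (g : R -> R) (P : pred R) (p : seq R) :
  (forall y, y \in p -> P y -> 1 <= g y) -> all P p -> 1 <= prodg g p.
Proof.
elim: p => [|y p IH] g1 /=; first by rewrite /prodg big_nil.
move=> /andP[Py ap]; rewrite prodg_cons -[1]mulr1 ler_pM //.
- by apply: g1 => //; rewrite inE eqxx.
- by apply: IH => // x xp; apply: g1; rewrite inE xp orbT.
Qed.
Definition Ff {R : realType} (x t : R) : R :=
  x * (ln x - ln t) + (1 - x) * (ln (1 - x) - ln (1 - t)).

Lemma lnD_div {R : realType} (a b : R) : 0 < a -> 0 < b -> ln (a / b) = ln a - ln b.
Proof. by move=> a0 b0; rewrite lnM ?posrE ?invr_gt0 // lnV ?posrE. Qed.

Lemma xlogxyE {R : realType} (a b : R) : 0 <= a -> 0 < b -> xlogxy a b = a * (ln a - ln b).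
Proof.
move=> a0 b0; rewrite /xlogxy; case: eqP => [->|/eqP an0]; first by rewrite mul0r.
by rewrite lnD_div // lt0r an0.
Qed.

Lemma xlogxy_aa {R : realType} (a : R) : xlogxy a a = 0.
Proof.
rewrite /xlogxy; case: eqP => // /eqP an0.
by rewrite divff // ln1 mulr0.
Qed.

Lemma KdivE {R : realType} (x t : R) : 0 <= x <= 1 -> 0 < t < 1 -> Kdiv x t = Ff x t.
Proof.
move=> /andP[x0 x1] /andP[t0 t1].
by rewrite /Kdiv /Ff !xlogxyE // ?subr_ge0 ?subr_gt0.
Qed.

Lemma Kdiv_xx {R : realType} (x : R) : Kdiv x x = 0.
Proof. by rewrite /Kdiv !xlogxy_aa addr0. Qed.

Lemma xlogxy_0 {R : realType} (a : R) : xlogxy a 0 = 0.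
Proof. by rewrite /xlogxy invr0 mulr0 ln0 // mulr0; case: ifP. Qed.

Lemma xlogxy_1 {R : realType} (a : R) : 0 <= a <= 1 -> xlogxy a 1 <= 0.
Proof.
move=> /andP[a0 a1]; rewrite /xlogxy divr1; case: ifP => // _.
by rewrite mulr_ge0_le0 // ln_le0.
Qed.

Lemma Kdiv_t0 {R : realType} (x : R) : 0 <= x <= 1 -> Kdiv x 0 <= 0.
Proof.
move=> /andP[x0 x1]; rewrite /Kdiv xlogxy_0 add0r subr0 xlogxy_1 //.
by rewrite subr_ge0 x1 lerBlDr lerDl.
Qed.

Lemma Kdiv_t1 {R : realType} (x : R) : 0 <= x <= 1 -> Kdiv x 1 <= 0.
Proof.
move=> x01; rewrite /Kdiv subrr xlogxy_0 addr0 xlogxy_1 //.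
Qed.

Lemma ln_sub_le {R : realType} (u v : R) : 0 < u -> 0 < v -> ln u - ln v <= u / v - 1.
Proof.
move=> u0 v0; rewrite -lnD_div //.
have := @le_ln1Dx R (u / v - 1); rewrite addrCA subrr addr0; apply.
by rewrite ltrBrDl subrr divr_gt0.
Qed.

Lemma Ff_diff {R : realType} (x t1 t2 : R) : 0 <= x <= 1 -> 0 < t1 < 1 -> 0 < t2 < 1 ->
  (t2 - t1) * (x - t2) / (t2 * (1 - t2)) <= Ff x t1 - Ff x t2.
Proof.
move=> /andP[x0 x1] /andP[a0 a1] /andP[b0 b1].
have h1 : x * (1 - t1 / t2) <= x * (ln t2 - ln t1).
  apply: ler_wpM2l => //; have := @ln_sub_le R t1 t2 a0 b0; lra.
have h2 : (1 - x) * (1 - (1 - t1) / (1 - t2)) <= (1 - x) * (ln (1 - t2) - ln (1 - t1)).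
  apply: ler_wpM2l; first by rewrite subr_ge0.
  have : 0 < 1 - t1 by rewrite subr_gt0.
  have : 0 < 1 - t2 by rewrite subr_gt0.
  move=> c0 d0; have := @ln_sub_le R (1 - t1) (1 - t2) d0 c0; lra.
have -> : (t2 - t1) * (x - t2) / (t2 * (1 - t2)) =
   x * (1 - t1 / t2) + (1 - x) * (1 - (1 - t1) / (1 - t2)).
  have : t2 != 0 by rewrite gt_eqF.
  have : 1 - t2 != 0 by rewrite gt_eqF // subr_gt0.
  move=> ? ?; field; apply/andP; split => //.
have -> : Ff x t1 - Ff x t2 = x * (ln t2 - ln t1) + (1 - x) * (ln (1 - t2) - ln (1 - t1)).
  by rewrite /Ff; ring.
exact: lerD.
Qed.
Lemma Ff_dec {R : realType} (x t1 t2 : R) : 0 <= x <= 1 -> 0 < t1 -> t1 <= t2 -> t2 <= x -> t2 < 1 ->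
  Ff x t2 <= Ff x t1.
Proof.
move=> x01 t10 t12 t2x t21.
have h := @Ff_diff R x t1 t2 x01.
rewrite -subr_ge0; apply: le_trans (h _ _); last 2 first.
- by rewrite t10 (le_lt_trans t12 t21).
- by rewrite (lt_le_trans t10 t12) t21.
apply: divr_ge0; first by rewrite mulr_ge0 // subr_ge0.
rewrite mulr_ge0 // ?subr_ge0 ?(ltW t21) //.
exact: ltW (lt_le_trans t10 t12).
Qed.

Lemma Ff_inc {R : realType} (x t1 t2 : R) : 0 <= x <= 1 -> 0 < t1 -> x <= t1 -> t1 <= t2 -> t2 < 1 ->
  Ff x t1 <= Ff x t2.
Proof.
move=> x01 t10 xt1 t12 t21.
have h := @Ff_diff R x t2 t1 x01.
rewrite -subr_ge0; apply: le_trans (h _ _); last 2 first.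
- by rewrite (lt_le_trans t10 t12) t21.
- by rewrite t10 (le_lt_trans t12 t21).
apply: divr_ge0; last by rewrite mulr_ge0 // ?subr_ge0 ?ltW // (le_lt_trans t12 t21).
by rewrite mulr_le0 // subr_le0.
Qed.

Lemma Ff_cont {R : realType} (x t : R) : 0 < t < 1 -> {for t, continuous (Ff x)}.
Proof.
move=> /andP[t0 t1].
rewrite /continuous_at /Ff.
apply: cvgD.
  apply: cvgM; first exact: cvg_cst.
  apply: cvgB; first exact: cvg_cst.
  exact: continuous_ln.
apply: cvgM; first exact: cvg_cst.
apply: cvgB; first exact: cvg_cst.
have h : {for t, continuous ((@ln R) \o (fun u : R => 1 - u))}.
  apply: continuous_comp.
    by apply: cvgB; [exact: cvg_cst | exact: cvg_id].
  by apply: continuous_ln; rewrite subr_gt0.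
exact: h.
Qed.

Lemma Ff_IVT {R : realType} (x a b v : R) : 0 < a -> a <= b -> b < 1 ->
  Num.min (Ff x a) (Ff x b) <= v <= Num.max (Ff x a) (Ff x b) ->
  exists2 c, a <= c <= b & Ff x c = v.
Proof.
move=> a0 ab b1 hv.
have hc : {within `[a, b], continuous (Ff x)}.
  apply: continuous_in_subspaceT => y; rewrite inE /= in_itv /= => /andP[ay yb].
apply: Ff_cont; rewrite (lt_le_trans a0 ay) /=.
  exact: le_lt_trans yb b1.
have [c cab fc] := @IVT R (Ff x) a b v ab hc hv.
by exists c => //; move: cab; rewrite in_itv.
Qed.

Lemma expR_lnq {R : realType} (k : nat) (u v : R) : 0 < u -> 0 < v ->
  expR (k%:R * (ln u - ln v)) = (u / v) ^+ k.
Proof.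
move=> u0 v0; rewrite expRM_natl expRD expRN !lnK ?posrE //.
Qed.
Definition good_part {R : realType} (n : nat) (s : R) (ok : seq R -> bool) : Prop :=
  exists (c : R) (g : R -> R) (G : R), [/\ 0 <= c, (forall y, 0 <= g y),
  measurable_fun setT g,
  (\int[@lebesgue_measure R]_(y in `[0%R, 1%R]) (g y)%:E = G%:E)%E &
  c * G ^+ n <= expR (- s) /\
  forall p : seq R, size p = n -> all in01 p -> ok p -> 1 <= c * prodg g p].

Lemma trivial_part {R : realType} n (s : R) (ok : seq R -> bool) :
  (forall p : seq R, size p = n -> all in01 p -> ~~ ok p) -> good_part n s ok.
Proof.
move=> H; exists 0, (step 1 0 set0), 1; split.
- by [].
- by apply: step_ge0.
- by apply: step_meas.
- by rewrite int_step // mul0e adde0.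
split; first by rewrite mul0r expR_ge0.
by move=> p sp ap okp; move: (H p sp ap); rewrite okp.
Qed.

Lemma pos_t {R : realType} (x t s : R) (n : nat) : 0 <= x <= 1 -> 0 <= t -> t < 1 -> 0 < s ->
  (0 < n)%N -> s < n%:R * Kdiv x t -> 0 < t /\ s / n%:R < Ff x t.
Proof.
move=> x01 t0 t1 s0 n0 hs.
have n0' : (0 : R) < n%:R by rewrite ltr0n.
have tp : 0 < t.
  rewrite lt_neqAle t0 andbT; apply/eqP => t00; move: hs; rewrite -t00.
  have h := @Kdiv_t0 R x x01.
  have h' : n%:R * Kdiv x 0 <= 0 by rewrite mulr_ge0_le0 // ltW.
  move=> h''; have := lt_le_trans h'' h'; by rewrite ltNge ltW.
split => //; rewrite ltr_pdivrMr // mulrC -KdivE //; last by rewrite tp.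
Qed.

Lemma pos_t1 {R : realType} (x t s : R) (n : nat) : 0 <= x <= 1 -> 0 < t -> t <= 1 -> 0 < s ->
  (0 < n)%N -> s < n%:R * Kdiv x t -> t < 1 /\ s / n%:R < Ff x t.
Proof.
move=> x01 t0 t1 s0 n0 hs.
have n0' : (0 : R) < n%:R by rewrite ltr0n.
have tp : t < 1.
  rewrite lt_neqAle t1 andbT; apply/eqP => t00; move: hs; rewrite t00.
  have h := @Kdiv_t1 R x x01.
  have h' : n%:R * Kdiv x 1 <= 0 by rewrite mulr_ge0_le0 // ltW.
  move=> h''; have := lt_le_trans h'' h'; by rewrite ltNge ltW.
split => //; rewrite ltr_pdivrMr // mulrC -KdivE //; by rewrite t0.
Qed.
Lemma in01_mem {R : realType} {p : seq R} {y : R} : all in01 p -> y \in p -> 0 <= y <= 1.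
Proof. by move/allP => h /h. Qed.

Lemma lower_part {R : realType} n j (s : R) : (0 < j)%N -> (j < n)%N -> 0 < s ->
  good_part n s (fun p => (s < n%:R * Kdiv (j%:R / n%:R) (order_stat p j)) &&
                          (order_stat p j < j%:R / n%:R)).
Proof.
move=> j0 jn s0.
have n0N : (0 < n)%N by apply: leq_ltn_trans jn.
have n0 : (0 : R) < n%:R by rewrite ltr0n.
set x := j%:R / n%:R.
have x0 : 0 < x by rewrite divr_gt0 // ltr0n.
have x1 : x < 1 by rewrite ltr_pdivrMr // mul1r ltr_nat.
have x01 : 0 <= x <= 1 by rewrite !ltW.
have nx : n%:R * x = j%:R by rewrite mulrC divfK // lt0r_neq0.
have nx' : n%:R * (1 - x) = (n - j)%:R by rewrite mulrBr mulr1 nx natrB // ltnW.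
have ev : forall p : seq R, size p = n -> all in01 p ->
    s < n%:R * Kdiv x (order_stat p j) -> order_stat p j < x ->
    [/\ 0 < order_stat p j, s / n%:R < Ff x (order_stat p j) &
        (j <= count (fun y : R => (y <= order_stat p j)%R) p)%N].
  move=> p sp ap hs ht.
  have hj : (0 < j <= size p)%N by rewrite j0 sp ltnW.
  have [tp cnt _] := @os_facts R p j hj.
  have /andP[t0 t1] := in01_mem ap tp.
  have [tpos hF] := @pos_t R x (order_stat p j) s n x01 t0 (lt_trans ht x1) s0 n0N hs.
  by split.
case: (pselect (exists e : R, [/\ 0 < e, e <= x & s / n%:R <= Ff x e])); last first.
  move=> nex; apply: trivial_part => p sp ap; apply/negP => /andP[hs ht].
  have [tpos hF _] := ev p sp ap hs ht.
  by apply: nex; exists (order_stat p j); split => //; [exact: ltW | exact: ltW].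
move=> [e [e0 ex He]].
have [a /andP[ea ax] Fa] : exists2 a, e <= a <= x & Ff x a = s / n%:R.
  apply: Ff_IVT => //.
  have -> : Ff x x = 0 by rewrite /Ff !subrr !mulr0 addr0.
  by rewrite ge_min le_max He /= divr_ge0 ?orbT // ltW.
have a0 : 0 < a by apply: lt_le_trans ea.
have a1 : a < 1 by apply: le_lt_trans x1.
have xa0 : 0 < 1 - x by rewrite subr_gt0.
have aa0 : 0 < 1 - a by rewrite subr_gt0.
set z := x * (1 - a) / (a * (1 - x)).
have z1 : 1 <= z.
  rewrite /z ler_pdivlMr ?mul1r ?mulr_gt0 //; nra.
have z0 : 0 < z by apply: lt_le_trans z1.
exists ((z^-1) ^+ j), (step 1 (z - 1) `[0%R, a[), (1 + (z - 1) * a).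
split.
- by rewrite exprn_ge0 // invr_ge0 ltW.
- by apply: step_ge0 => //; rewrite subr_ge0.
- exact: (@step_meas R 1 (z - 1) _ (measurable_itv _)).
- have mA : measurable (`[0%R, a[ : set R) by exact: measurable_itv.
  rewrite int_step ?subr_ge0 //.
  by rewrite meas_low ?ltW ?a0 ?a1 // -EFinM -EFinD.
split.
- have -> : expR (- s) = (a / x) ^+ j * ((1 - a) / (1 - x)) ^+ (n - j).
    have -> : - s = j%:R * (ln a - ln x) + (n - j)%:R * (ln (1 - a) - ln (1 - x)).
      have -> : s = n%:R * Ff x a by rewrite Fa mulrC divfK // lt0r_neq0.
      by rewrite -nx -nx' /Ff; ring.
    by rewrite expRD !expR_lnq.
  have G1E : 1 + (z - 1) * a = (1 - a) / (1 - x).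
    rewrite /z; field; rewrite !lt0r_neq0 //.
  have zE : z^-1 = (a / x) * ((1 - a) / (1 - x))^-1.
    rewrite /z; field; rewrite !lt0r_neq0 //.
  have eG : ((1 - a) / (1 - x)) ^+ n = ((1 - a) / (1 - x)) ^+ j * ((1 - a) / (1 - x)) ^+ (n - j).
    by rewrite -exprD subnKC // ltnW.
  rewrite G1E zE exprMn eG mulrA -[_ * _ * _ ^+ j]mulrA exprVn.
  rewrite mulVf ?mulr1 // expf_neq0 // lt0r_neq0 // divr_gt0 //.
- move=> p sp ap /andP[hs ht].
  have [tpos hF cnt] := ev p sp ap hs ht.
  have ta : order_stat p j < a.
    rewrite ltNge; apply/negP => at'.
    have := @Ff_dec R x a (order_stat p j) x01 a0 at' (ltW ht) (lt_trans ht x1).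
    by rewrite Fa leNgt hF.
  have hz : z ^+ j <= prodg (step 1 (z - 1) `[0%R, a[) p.
    apply: (@prod_ge_pow R _ (fun y : R => (y <= order_stat p j)%R) z p j) => //.
    + by move=> y _; rewrite /step lerDl mulr_ge0 ?subr_ge0.
    + move=> y yp /= yt; rewrite /step indicE.
      have /andP[y0 _] := in01_mem ap yp.
      rewrite (_ : y \in _ = true); first by rewrite mulr1 addrC subrK.
      by apply/mem_set; rewrite /= in_itv /= y0 (le_lt_trans yt ta).
  apply: le_trans (ler_wpM2l _ hz); last by rewrite exprn_ge0 // invr_ge0 ltW.
  by rewrite exprVn mulVf // expf_neq0 // lt0r_neq0.
Qed.
Lemma upper_part {R : realType} n j (s : R) : (0 < j)%N -> (j < n)%N -> 0 < s ->
  good_part n s (fun p => (s < n%:R * Kdiv (j%:R / n%:R) (order_stat p j)) &&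
                          (j%:R / n%:R < order_stat p j)).
Proof.
move=> j0 jn s0.
have n0N : (0 < n)%N by apply: leq_ltn_trans jn.
have n0 : (0 : R) < n%:R by rewrite ltr0n.
set x := j%:R / n%:R.
have x0 : 0 < x by rewrite divr_gt0 // ltr0n.
have x1 : x < 1 by rewrite ltr_pdivrMr // mul1r ltr_nat.
have x01 : 0 <= x <= 1 by rewrite !ltW.
have nx : n%:R * x = j%:R by rewrite mulrC divfK // lt0r_neq0.
have nx' : n%:R * (1 - x) = (n - j)%:R by rewrite mulrBr mulr1 nx natrB // ltnW.
have ev : forall p : seq R, size p = n -> all in01 p ->
    s < n%:R * Kdiv x (order_stat p j) -> x < order_stat p j ->
    [/\ order_stat p j < 1, s / n%:R < Ff x (order_stat p j) &
        (n - j <= count (fun y : R => (order_stat p j <= y)%R) p)%N].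
  move=> p sp ap hs ht.
  have hj : (0 < j <= size p)%N by rewrite j0 sp ltnW.
  have [tp _ cnt] := @os_facts R p j hj.
  have /andP[t0 t1] := in01_mem ap tp.
  have [t1' hF] := @pos_t1 R x (order_stat p j) s n x01 (lt_trans x0 ht) t1 s0 n0N hs.
  split => //; apply: leq_trans _ cnt; rewrite sp; exact: leq_addr.
case: (pselect (exists e : R, [/\ x <= e, e < 1 & s / n%:R <= Ff x e])); last first.
  move=> nex; apply: trivial_part => p sp ap; apply/negP => /andP[hs ht].
  have [t1 hF _] := ev p sp ap hs ht.
  by apply: nex; exists (order_stat p j); split => //; [exact: ltW | exact: ltW].
move=> [e [xe e1 He]].
have [b /andP[xb be] Fb] : exists2 b, x <= b <= e & Ff x b = s / n%:R.
  apply: Ff_IVT => //.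
  have -> : Ff x x = 0 by rewrite /Ff !subrr !mulr0 addr0.
  by rewrite ge_min le_max He /= divr_ge0 ?orbT // ltW.
have b0 : 0 < b by apply: lt_le_trans xb.
have b1 : b < 1 by apply: le_lt_trans e1.
have xa0 : 0 < 1 - x by rewrite subr_gt0.
have bb0 : 0 < 1 - b by rewrite subr_gt0.
set w := (1 - x) * b / ((1 - b) * x).
have w1 : 1 <= w.
  rewrite /w ler_pdivlMr ?mul1r; last by rewrite mulr_gt0.
  rewrite -subr_ge0.
  have -> : (1 - x) * b - (1 - b) * x = b - x by ring.
  by rewrite subr_ge0.
have w0 : 0 < w by apply: lt_le_trans w1.
exists ((w^-1) ^+ (n - j)), (step 1 (w - 1) `]b, 1%R]), (1 + (w - 1) * (1 - b)).
split.
- by rewrite exprn_ge0 // invr_ge0 ltW.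
- by apply: step_ge0 => //; rewrite subr_ge0.
- exact: (@step_meas R 1 (w - 1) _ (measurable_itv _)).
- have mA : measurable (`]b, 1%R] : set R) by exact: measurable_itv.
  rewrite int_step ?subr_ge0 //.
  by rewrite meas_high ?ltW ?b0 ?b1 // -EFinM -EFinD.
split.
- have -> : expR (- s) = (b / x) ^+ j * ((1 - b) / (1 - x)) ^+ (n - j).
    have -> : - s = j%:R * (ln b - ln x) + (n - j)%:R * (ln (1 - b) - ln (1 - x)).
      have -> : s = n%:R * Ff x b by rewrite Fb mulrC divfK // lt0r_neq0.
      by rewrite -nx -nx' /Ff; ring.
    by rewrite expRD !expR_lnq.
  have G1E : 1 + (w - 1) * (1 - b) = b / x.
    rewrite /w; field; rewrite !lt0r_neq0 //.
  have wE : w^-1 = ((1 - b) / (1 - x)) * (b / x)^-1.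
    rewrite /w; field; rewrite !lt0r_neq0 //.
  have eG : (b / x) ^+ n = (b / x) ^+ (n - j) * (b / x) ^+ j.
    by rewrite -exprD subnK // ltnW.
  rewrite G1E wE exprMn eG mulrA -[_ * _ * _ ^+ (n - j)]mulrA exprVn.
  rewrite mulVf ?mulr1; first by rewrite [leLHS]mulrC.
  by rewrite expf_neq0 // lt0r_neq0 // divr_gt0.
- move=> p sp ap /andP[hs ht].
  have [t1 hF cnt] := ev p sp ap hs ht.
  have tb : b < order_stat p j.
    rewrite ltNge; apply/negP => tb'.
    have := @Ff_inc R x (order_stat p j) b x01 (lt_trans x0 ht) (ltW ht) tb' b1.
    by rewrite Fb leNgt hF.
  have hz : w ^+ (n - j) <= prodg (step 1 (w - 1) `]b, 1%R]) p.
    apply: (@prod_ge_pow R _ (fun y : R => (order_stat p j <= y)%R) w p (n - j)) => //.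
    + by move=> y _; rewrite /step lerDl mulr_ge0 ?subr_ge0.
    + move=> y yp /= yt; rewrite /step indicE.
      have /andP[_ y1] := in01_mem ap yp.
      rewrite (_ : y \in _ = true); first by rewrite mulr1 addrC subrK.
      by apply/mem_set; rewrite /= in_itv /= y1 (lt_le_trans tb yt).
  apply: le_trans (ler_wpM2l _ hz); last by rewrite exprn_ge0 // invr_ge0 ltW.
  by rewrite exprVn mulVf // expf_neq0 // lt0r_neq0.
Qed.
Lemma lower_part_n {R : realType} n (s : R) : (0 < n)%N -> 0 < s ->
  good_part n s (fun p => (s < n%:R * Kdiv (n%:R / n%:R) (order_stat p n)) &&
                          (order_stat p n < n%:R / n%:R)).
Proof.
move=> n0N s0.
have n0 : (0 : R) < n%:R by rewrite ltr0n.
have x1 : n%:R / n%:R = 1 :> R by rewrite divff // lt0r_neq0.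
rewrite x1.
set a := expR (- (s / n%:R)).
have a0 : 0 < a by rewrite expR_gt0.
have a1 : a < 1 by rewrite expR_lt1 oppr_lt0 divr_gt0.
exists 1, (step 0 1 `[0%R, a[), a.
split.
- by [].
- exact: step_ge0.
- exact: (@step_meas R 0 1 _ (measurable_itv _)).
- have mA : measurable (`[0%R, a[ : set R) by exact: measurable_itv.
  rewrite int_step //.
  by rewrite meas_low ?ltW ?a0 ?a1 // mul1e add0e.
split.
- by rewrite mul1r /a -expRM_natl mulrN mulrC divfK // lt0r_neq0.
- move=> p sp ap /andP[hs ht].
  have hj : (0 < n <= size p)%N by apply/andP; split => //; rewrite sp.
  have [tp cnt _] := @os_facts R p n hj.
  have /andP[t0 t1] := in01_mem ap tp.
  have x01 : 0 <= (1 : R) <= 1 by rewrite ler01 lexx.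
  have [tpos hF] := @pos_t R 1 (order_stat p n) s n x01 t0 ht s0 n0N hs.
  have ta : order_stat p n < a.
    move: hF; rewrite /Ff subrr ln1 mul0r addr0 mul1r sub0r ltrNr => hF.
    by rewrite -(lnK (x:=order_stat p n)) ?posrE // /a ltr_expR.
  rewrite mul1r; apply: (@prod_ge_all R _ (fun y : R => (y <= order_stat p n)%R)).
    move=> y yp /= yt; rewrite /step indicE.
    have /andP[y0 _] := in01_mem ap yp.
    rewrite (_ : y \in _ = true); first by rewrite mulr1 add0r.
    by apply/mem_set; rewrite /= in_itv /= y0 (le_lt_trans yt ta).
  rewrite all_count eqn_leq count_size /= sp; exact: cnt.
Qed.

Lemma main_bound {R : realType} n j (s : R) : (0 < j)%N -> (j <= n)%N -> 0 < s ->
  (unif_prob n (fun p : seq R => (s < n%:R * Kdiv (j%:R / n%:R) (order_stat p j))%R)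
   <= (2 * expR (- s))%:E)%E.
Proof.
move=> j0 jn s0.
have n0N : (0 < n)%N by apply: leq_trans jn.
set x := j%:R / n%:R.
have [L U] : good_part n s (fun p => (s < n%:R * Kdiv x (order_stat p j)) && (order_stat p j < x)) /\
             good_part n s (fun p => (s < n%:R * Kdiv x (order_stat p j)) && (x < order_stat p j)).
  have [jn'|jn'] := ltnP j n.
    by split; [exact: lower_part | exact: upper_part].
  have ejn : j = n by apply/eqP; rewrite eqn_leq jn jn'.
  rewrite /x; subst j; split; first exact: lower_part_n.
  apply: trivial_part => p sp ap; apply/negP => /andP[_ ht].
  have hj : (0 < n <= size p)%N by apply/andP; split => //; rewrite sp.
  have [tp _ _] := @os_facts R p n hj.
  have /andP[_ t1] := in01_mem ap tp.
  move: ht; rewrite divff ?lt0r_neq0 ?ltr0n //; by rewrite ltNge t1.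
move: L U => [c1 [g1 [G1 [c10 g10 mg1 I1 [B1 P1]]]]] [c2 [g2 [G2 [c20 g20 mg2 I2 [B2 P2]]]]].
apply: le_trans (@unif_le_Iint R n _ (fun p => c1 * prodg g1 p + c2 * prodg g2 p) _) _.
  move=> p sp ap.
  have pr1 : 0 <= prodg g1 p by apply: prodr_ge0.
  have pr2 : 0 <= prodg g2 p by apply: prodr_ge0.
  split; first by rewrite addr_ge0 ?mulr_ge0.
  move=> hs.
  case: (ltgtP (order_stat p j) x) => ht.
  - apply: le_trans (P1 p sp ap _) _; first by rewrite hs ht.
    by rewrite lerDl mulr_ge0.
  - apply: le_trans (P2 p sp ap _) _; first by rewrite hs ht.
    by rewrite lerDr mulr_ge0.
  - by move: hs; rewrite ht Kdiv_xx mulr0 ltNge ltW.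
rewrite (@Iint_prod R n c1 c2 g1 g2 G1 G2 g10 g20 mg1 mg2 I1 I2 c10 c20) lee_fin mulr_natl mulr2n.
exact: lerD.
Qed.
Lemma expR1_ge2 {R : realType} : 2 <= expR (1 : R).
Proof. by have := @expR_ge1Dx R 1. Qed.

Lemma expR1_le9 {R : realType} : expR (1 : R) <= 9.
Proof.
set u := expR (2^-1 : R).
have u0 : 0 < u by rewrite expR_gt0.
have h := @expR_ge1Dx R (- 2^-1); rewrite expRN -/u in h.
have h2 : u * (1 - 2^-1) <= 1.
  have := ler_wpM2l (ltW u0) h; by rewrite mulfV ?lt0r_neq0.
have u2 : u <= 2 by move: h2; rewrite -[1 - 2^-1]/(1 - 2^-1 : R); lra.
have -> : expR (1 : R) = u ^+ 2 by rewrite /u -expRM_natl divff // pnatr_eq0.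
have : u ^+ 2 <= 4 by rewrite expr2; nra.
lra.
Qed.

Theorem lemma5 (R : realType) (n : nat) (hn : (2 < n)%N) (s : R) (hs : 0 < s) :
  (forall j : nat, (2 <= j <= n)%N ->
     (unif_prob n (fun p : seq R =>
        (s < n%:R * Kdiv (j%:R / n%:R) (order_stat p j))%R)
      <= (expR 1 * Num.sqrt 2 * j%:R * expR (- ((1 - j%:R^-1) * s)))%:E)%E)
  /\
  (unif_prob n (fun p : seq R =>
        (s < n%:R * Kdiv (1 / n%:R) (order_stat p 1))%R)
      <= ((1 + 9 / expR 1) * expR (- s))%:E)%E.
Proof.
split.
- move=> j /andP[j2 jn].
  have j0 : (0 < j)%N by apply: leq_trans j2.
  apply: le_trans (@main_bound R n j s j0 jn hs) _; rewrite lee_fin.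
  apply: ler_pM; [by [] | exact: ltW (expR_gt0 _) | |].
  + have s1 : 1 <= Num.sqrt (2 : R).
      by rewrite -[X in X <= _](@sqrtr1 R); apply: ler_wsqrtr; rewrite ler1n.
    have j2' : 2 <= j%:R :> R by rewrite ler_nat.
    have e2 := @expR1_ge2 R.
    have e1 : 0 <= expR (1 : R) by exact: ltW (expR_gt0 _).
    have h1 : 2 <= expR 1 * Num.sqrt (2 : R) by nra.
    nra.
  + rewrite ler_expR lerN2 mulrBl mul1r lerBlDr lerDl.
    by apply: mulr_ge0; [rewrite invr_ge0 ler0n | exact: ltW].
- have n1 : (1 <= n)%N by apply: leq_trans hn.
  have H := @main_bound R n 1 s erefl n1 hs; rewrite mulr1n in H.
  apply: le_trans H _; rewrite lee_fin.
  apply: ler_wpM2r; first exact: ltW (expR_gt0 _).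
  have e0 : 0 < expR (1 : R) by exact: expR_gt0.
  have : 1 <= 9 / expR (1 : R) by rewrite ler_pdivlMr // mul1r expR1_le9.
  lra.
Qed.
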